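(* Let $(V,\omega,H)$ be a linear Hamiltonian system (a finite-dimensional real symplectic vector space $(V,\omega)$ with a quadratic form $H$) which decomposes as a direct sum $(V_1,\omega_1,H_1)\oplus(V_2,\omega_2,H_2)$, i.e. $V=V_1\oplus V_2$ with $\omega=\omega_1\oplus\omega_2$ and $H(v_1+v_2)=H_1(v_1)+H_2(v_2)$. Let $\mathcal{N}=H^{-1}(0)$ and $\mathcal{N}_j=H_j^{-1}(0)\subset V_j$. Suppose the linear Hamiltonian vector fields associated with $H_1$ and $H_2$ have no eigenvalues in common. Then every Lagrangian subspace $L\subset V$ with $L\subset\mathcal{N}$ can be written as a direct sum $L=L_1\oplus L_2$, where each $L_j$ is a Lagrangian subspace of $(V_j,\omega_j)$ contained in $\mathcal{N}_j$.
   Context: For a linear Hamiltonian system $(V,\omega,H)$, the associated linear vector field is $X_H$ defined by $\omega(X_H(v),\cdot)=\mathrm{d}H(v)$; its eigenvalues are the eigenvalues of the system. A Lagrangian subspace of a symplectic vector space is a subspace of half the dimension on which the symplectic form vanishes. *)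

(* Defs.v *)
From HB Require Import structures.
From mathcomp Require Import all_boot all_order all_algebra.
From mathcomp Require Import complex.
From mathcomp Require Import reals.

Set Implicit Arguments.
Unset Strict Implicit.
Unset Printing Implicit Defensive.

Import Order.TTheory GRing.Theory Num.Theory.
Local Open Scope ring_scope.

(* Vectors of V = R^n are row vectors 'rV[R]_n.
   A bilinear form is given by its Gram matrix W : omega(u, w) = u W w^T.   *)
Definition bform {R : realType} {n : nat} (W : 'M[R]_n) (u w : 'rV[R]_n) : R :=
  (u *m W *m w^T) 0 0.

Definition symplectic_form {R : realType} {n : nat} (W : 'M[R]_n) : Prop :=
  W^T = - W /\ W \in unitmx.

Definition qform {R : realType} {n : nat} (S : 'M[R]_n) (v : 'rV[R]_n) : R :=
  (v *m S *m v^T) 0 0.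

(* Its differential: dH(v)(w) = 2 v S w^T  (S symmetric). *)
Definition dqform {R : realType} {n : nat} (S : 'M[R]_n) (v w : 'rV[R]_n) : R :=
  2 * (v *m S *m w^T) 0 0.

(* The Hamiltonian vector field X_H, v |-> v *m ham_mx W S, defined by
   omega(X_H(v), w) = dH(v)(w) for all w (see ham_mx_spec below). *)
Definition ham_mx {R : realType} {n : nat} (W S : 'M[R]_n) : 'M[R]_n :=
  2%:R *: (S *m invmx W).

Lemma ham_mx_spec {R : realType} {n : nat} (W S : 'M[R]_n) :
  W \in unitmx ->
  forall v w : 'rV[R]_n, bform W (v *m ham_mx W S) w = dqform S v w.
Proof.
move=> Wu v w; rewrite /bform /dqform /ham_mx.
rewrite -scalemxAr -!scalemxAl mxE !mulmxA -(mulmxA _ (invmx W)).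
by rewrite mulVmx // mulmx1.
Qed.

(* Eigenvalues of a real linear map are its complex eigenvalues
   (eigenvalues of the complexification). *)
Definition ham_eigenvalue {R : realType} {n : nat} (W S : 'M[R]_n) (z : R[i]) : bool :=
  eigenvalue (map_mx (real_complex R) (ham_mx W S)) z.

(* A subspace of R^n is the row space of a matrix L : 'M_n.
   L is Lagrangian for W: dim L = n/2 and omega vanishes on L. *)
Definition lagrangian {R : realType} {n : nat} (W : 'M[R]_n) (L : 'M[R]_n) : Prop :=
  (\rank L * 2 = n)%N /\ (forall u w : 'rV[R]_n, (u <= L)%MS -> (w <= L)%MS -> bform W u w = 0).

Definition in_null {R : realType} {n : nat} (S : 'M[R]_n) (L : 'M[R]_n) : Prop :=
  forall v : 'rV[R]_n, (v <= L)%MS -> qform S v = 0.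

(* Main.v *)
Require Import Defs.
From HB Require Import structures.
From mathcomp Require Import all_boot all_order all_algebra.
From mathcomp Require Import complex.
From mathcomp Require Import reals.
From mathcomp Require Import ring lra zify.
Import GRing.Theory Num.Theory.
Local Open Scope ring_scope.
Section Crux.
Variable F : fieldType.

Lemma horner_block k1 k2 (A1 : 'M[F]_k1.+1) (A2 : 'M[F]_k2.+1) (p : {poly F}) :
  horner_mx (block_mx A1 0 0 A2 : 'M_(k1.+1 + k2.+1)) p
  = block_mx (horner_mx A1 p) 0 0 (horner_mx A2 p).
Proof.
elim/poly_ind: p => [|p c IH].
  by rewrite !rmorph0 block_mx0.
rewrite !rmorphD !rmorphM /= !horner_mx_X !horner_mx_C IH -!mulmxE.
have H1 := mulmx_block (horner_mx A1 p) 0 0 (horner_mx A2 p) A1 0 0 A2.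
have H2 := scalar_mx_block k1.+1 k2.+1 c.
have H3 := add_block_mx (horner_mx A1 p *m A1) 0 0 (horner_mx A2 p *m A2) c%:M 0 0 c%:M.
rewrite !mulmx0 !mul0mx !addr0 !add0r in H1.
simpl in H3; rewrite !add0r in H3.
exact: (etrans (f_equal2 +%R H1 H2) H3).
Qed.

Lemma split_stable n1 n2 (A1 : 'M[F]_n1) (A2 : 'M[F]_n2) (L : 'M[F]_(n1 + n2)) :
  coprimep (char_poly A1) (char_poly A2) ->
  (L *m block_mx A1 0 0 A2 <= L)%MS ->
  (L *m block_mx 1%:M 0 0 0 <= L)%MS.
Proof.
case: n1 => [|k1] in A1 L *.
  have -> : block_mx (1%:M : 'M[F]_0) 0 0 (0 : 'M_n2) = 0.
    have -> : (1%:M : 'M[F]_0) = 0 by apply/matrixP => -[].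
    exact: block_mx0.
  by rewrite mulmx0 sub0mx.
case: n2 => [|k2] in A2 L *.
  have -> : block_mx (1%:M : 'M[F]_k1.+1) 0 0 (0 : 'M_0) = 1%:M.
    have -> : (0 : 'M[F]_0) = 1%:M by apply/matrixP => -[].
    by rewrite -scalar_mx_block.
  by rewrite mulmx1.
move=> /Bezout_eq1_coprimepP [[u v] /= huv] hst.
have E : block_mx (1%:M : 'M[F]_k1.+1) 0 0 (0 : 'M_k2.+1)
   = horner_mx (block_mx A1 0 0 A2 : 'M_(k1.+1 + k2.+1)) (v * char_poly A2).
  rewrite horner_block.
  have -> : horner_mx A2 (v * char_poly A2) = 0 by rewrite rmorphM /= Cayley_Hamilton mulr0.
  have -> : horner_mx A1 (v * char_poly A2) = 1%:M.
    have -> : v * char_poly A2 = 1 - u * char_poly A1.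
      by apply/eqP; rewrite eq_sym subr_eq addrC huv.
    by rewrite rmorphB rmorph1 rmorphM /= Cayley_Hamilton mulr0 subr0.
  by [].
rewrite E; exact: horner_mx_stable.
Qed.
End Crux.

Section Main.
Context {R : realType}.

Lemma coprime_char n1 n2 (A1 : 'M[R]_n1) (A2 : 'M[R]_n2) :
  (forall z : R[i], ~ (eigenvalue (map_mx (real_complex R) A1) z /\
                        eigenvalue (map_mx (real_complex R) A2) z)) ->
  coprimep (char_poly A1) (char_poly A2).
Proof.
move=> H; rewrite -(coprimep_map (real_complex R)) !map_char_poly.
rewrite /coprimep; apply/negPn/negP => /closed_rootP [x].
by rewrite root_gcd -!eigenvalue_root_char => /andP[h1 h2]; apply: (H x).
Qed.

Lemma entry_form k n (M : 'M[R]_(k, n)) (X : 'M_n) i j :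
  (M *m X *m M^T) i j = (row i M *m X *m (row j M)^T) 0 0.
Proof.
rewrite !mxE; apply: eq_bigr => l _; rewrite !mxE; congr (_ * _).
by apply: eq_bigr => m _; rewrite !mxE.
Qed.

Lemma form0 k n (M : 'M[R]_(k, n)) (X : 'M_n) :
  (forall u w : 'rV_n, (u <= M)%MS -> (w <= M)%MS -> (u *m X *m w^T) 0 0 = 0) ->
  M *m X *m M^T = 0.
Proof.
move=> H; apply/matrixP => i j; rewrite entry_form H ?row_sub //.
by rewrite mxE.
Qed.

Lemma addE m n (A B : 'M[R]_(m, n)) i j : (A + B) i j = A i j + B i j.
Proof. by rewrite mxE. Qed.

Lemma polar n (S : 'M[R]_n) (L : 'M[R]_n) : S^T = S -> in_null S L ->
  forall u w : 'rV_n, (u <= L)%MS -> (w <= L)%MS -> (u *m S *m w^T) 0 0 = 0.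
Proof.
move=> hS hN u w hu hw.
have sym : (w *m S *m u^T) 0 0 = (u *m S *m w^T) 0 0.
  have e : (w *m S *m u^T)^T = u *m S *m w^T by rewrite !trmx_mul trmxK hS mulmxA.
  by rewrite -e [RHS]mxE.
have := hN (u + w) (addmx_sub hu hw).
rewrite /qform linearD /= !mulmxDl !mulmxDr !addE.
rewrite -!/(qform S _) hN // hN // sym.
move=> h; lra.
Qed.

Lemma perp_sub n (W L : 'M[R]_n) : W \in unitmx -> (\rank L * 2 = n)%N ->
  L *m W *m L^T = 0 ->
  forall m (X : 'M_(m, n)), X *m W *m L^T = 0 -> (X <= L)%MS.
Proof.
move=> Wu hr hL m X hX.
have LK : (L <= kermx (W *m L^T))%MS by rewrite sub_kermx mulmxA hL.
have rK : \rank (kermx (W *m L^T)) = \rank L.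
  rewrite mxrank_ker -mxrank_tr trmx_mul trmxK mxrankMfree ?row_free_unit ?unitmx_tr //.
  lia.
have KL : (kermx (W *m L^T) <= L)%MS by rewrite -(mxrank_leqif_sup LK).2 rK.
by apply: submx_trans KL; rewrite sub_kermx mulmxA hX.
Qed.

Lemma iso_bound n (W M : 'M[R]_n) : W \in unitmx -> M *m W *m M^T = 0 ->
  (\rank M * 2 <= n)%N.
Proof.
move=> Wu hM.
have LK : (M <= kermx (W *m M^T))%MS by rewrite sub_kermx mulmxA hM.
have := mxrankS LK.
rewrite mxrank_ker -(mxrank_tr (W *m M^T)) trmx_mul trmxK mxrankMfree ?row_free_unit ?unitmx_tr //.
have := rank_leq_col M.
move=> h1 h2; lia.
Qed.

Lemma form_l n1 n2 (X : 'M[R]_n1) (Y : 'M[R]_n2) (u w : 'rV_n1) :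
  row_mx u (0 : 'rV_n2) *m block_mx X 0 0 Y *m (row_mx w (0 : 'rV_n2))^T
  = u *m X *m w^T.
Proof.
by rewrite mul_row_block !mulmx0 !mul0mx !addr0 tr_row_mx mul_row_col trmx0 mulmx0 addr0.
Qed.

Lemma form_r n1 n2 (X : 'M[R]_n1) (Y : 'M[R]_n2) (u w : 'rV_n2) :
  row_mx (0 : 'rV_n1) u *m block_mx X 0 0 Y *m (row_mx (0 : 'rV_n1) w)^T
  = u *m Y *m w^T.
Proof.
by rewrite mul_row_block !mulmx0 !mul0mx !add0r tr_row_mx mul_row_col trmx0 mulmx0 add0r.
Qed.

Lemma row_mx0_sub m1 m2 n1 n2 (X : 'M[R]_(m1, n1)) (Y : 'M[R]_(m2, n1)) :
  (X <= Y)%MS -> (row_mx X (0 : 'M_(m1, n2)) <= row_mx Y (0 : 'M_(m2, n2)))%MS.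
Proof.
case/submxP => D ->.
have -> : row_mx (D *m Y) (0 : 'M_(m1, n2)) = D *m row_mx Y 0 by rewrite mul_mx_row mulmx0.
exact: submxMl.
Qed.

Lemma row_0mx_sub m1 m2 n1 n2 (X : 'M[R]_(m1, n2)) (Y : 'M[R]_(m2, n2)) :
  (X <= Y)%MS -> (row_mx (0 : 'M_(m1, n1)) X <= row_mx (0 : 'M_(m2, n1)) Y)%MS.
Proof.
case/submxP => D ->.
have -> : row_mx (0 : 'M_(m1, n1)) (D *m Y) = D *m row_mx 0 Y by rewrite mul_mx_row mulmx0.
exact: submxMl.
Qed.

End Main.

Theorem lemma2 (R : realType) (n1 n2 : nat)
  (W1 S1 : 'M[R]_n1) (W2 S2 : 'M[R]_n2) :
  symplectic_form W1 -> symplectic_form W2 ->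
  S1^T = S1 -> S2^T = S2 ->
  (forall z : R[i], ~ (ham_eigenvalue W1 S1 z /\ ham_eigenvalue W2 S2 z)) ->
  forall L : 'M[R]_(n1 + n2),
    lagrangian (block_mx W1 0 0 W2) L ->
    in_null (block_mx S1 0 0 S2) L ->
    exists (L1 : 'M[R]_n1) (L2 : 'M[R]_n2),
      [/\ lagrangian W1 L1, in_null S1 L1,
          lagrangian W2 L2, in_null S2 L2 &
          (L == col_mx (row_mx L1 0) (row_mx 0 L2))%MS].
Proof.
move=> [_ W1u] [_ W2u] hS1 hS2 heig L [hrk hiso] hnull.
set A1 := ham_mx W1 S1; set A2 := ham_mx W2 S2.
have AW1 : A1 *m W1 = 2%:R *: S1.
  by rewrite /A1 /ham_mx -scalemxAl -mulmxA mulVmx // mulmx1.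
have AW2 : A2 *m W2 = 2%:R *: S2.
  by rewrite /A2 /ham_mx -scalemxAl -mulmxA mulVmx // mulmx1.
have AW : block_mx A1 0 0 A2 *m block_mx W1 0 0 W2 = 2%:R *: block_mx S1 0 0 S2.
  by rewrite mulmx_block !mulmx0 !mul0mx !addr0 !add0r AW1 AW2 scale_block_mx !scaler0.
have Wu : block_mx W1 0 0 W2 \in unitmx.
  by rewrite unitmxE det_ublock unitrM -!unitmxE W1u W2u.
have hS : (block_mx S1 0 0 S2)^T = block_mx S1 0 0 S2.
  by rewrite tr_block_mx hS1 hS2 !trmx0.
have LWL : L *m block_mx W1 0 0 W2 *m L^T = 0 by apply: form0 => u w hu hw; exact: hiso.
have LSL : L *m block_mx S1 0 0 S2 *m L^T = 0 by apply: form0; exact: polar.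
have stab : (L *m block_mx A1 0 0 A2 <= L)%MS.
  have := @perp_sub _ _ _ _ Wu hrk LWL _ (L *m block_mx A1 0 0 A2). apply.
  by rewrite -(mulmxA L) AW -scalemxAr -scalemxAl LSL scaler0.
have E1 := @split_stable _ _ _ _ _ _ (coprime_char _ _ _ _ heig) stab.
pose P1 := block_mx (1%:M : 'M[R]_n1) (0 : 'M_(n1, n2)) (0 : 'M_(n2, n1)) (0 : 'M_n2).
pose P2 := block_mx (0 : 'M[R]_n1) (0 : 'M_(n1, n2)) (0 : 'M_(n2, n1)) (1%:M : 'M_n2).
have EL1 : L *m P1 = row_mx (lsubmx L) 0.
  by rewrite -{1}(hsubmxK L) mul_row_block !mulmx0 !mulmx1 !addr0.
have EL2 : L *m P2 = row_mx 0 (rsubmx L).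
  by rewrite -{1}(hsubmxK L) mul_row_block !mulmx0 !mulmx1 !add0r.
have E12 : P1 + P2 = 1%:M.
  by rewrite add_block_mx !addr0 !add0r -scalar_mx_block.
have E2 : (L *m P2 <= L)%MS.
  have -> : P2 = 1%:M - P1.
    by rewrite -E12 addrC addKr.
  by rewrite mulmxBr mulmx1 addmx_sub ?submx_refl // eqmx_opp.
have sub1 : forall m (X : 'M_(m, n1)), (X <= lsubmx L)%MS -> (row_mx X (0 : 'M_(m, n2)) <= L)%MS.
  move=> m X /(@row_mx0_sub _ _ _ _ n2 _ (lsubmx L)); rewrite -EL1 => h.
  exact: submx_trans h E1.
have sub2 : forall m (X : 'M_(m, n2)), (X <= rsubmx L)%MS -> (row_mx (0 : 'M_(m, n1)) X <= L)%MS.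
  move=> m X /(@row_0mx_sub _ _ _ n1 _ _ (rsubmx L)); rewrite -EL2 => h.
  exact: submx_trans h E2.
pose L1 := (<<lsubmx L>>%MS : 'M_n1).
pose L2 := (<<rsubmx L>>%MS : 'M_n2).
have iso1 : forall u w : 'rV_n1, (u <= L1)%MS -> (w <= L1)%MS -> bform W1 u w = 0.
  move=> u w; rewrite !genmxE => hu hw.
  have := hiso _ _ (sub1 _ _ hu) (sub1 _ _ hw).
  by rewrite /bform form_l.
have iso2 : forall u w : 'rV_n2, (u <= L2)%MS -> (w <= L2)%MS -> bform W2 u w = 0.
  move=> u w; rewrite !genmxE => hu hw.
  have := hiso _ _ (sub2 _ _ hu) (sub2 _ _ hw).
  by rewrite /bform form_r.
have null1 : in_null S1 L1.
  move=> v; rewrite genmxE => hv.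
  by have := hnull _ (sub1 _ _ hv); rewrite /qform form_l.
have null2 : in_null S2 L2.
  move=> v; rewrite genmxE => hv.
  by have := hnull _ (sub2 _ _ hv); rewrite /qform form_r.
have Lle : (L <= col_mx (row_mx L1 0) (row_mx 0 L2))%MS.
  rewrite -addsmxE -{1}[L]mulmx1 -E12 mulmxDr EL1 EL2.
  by apply: addmx_sub_adds; [apply: row_mx0_sub | apply: row_0mx_sub]; rewrite genmxE.
have Lge : (col_mx (row_mx L1 0) (row_mx 0 L2) <= L)%MS.
  by rewrite -addsmxE addsmx_sub sub1 ?sub2 // genmxE.
have b1 := @iso_bound _ _ _ _ W1u (form0 _ _ _ _ iso1).
have b2 := @iso_bound _ _ _ _ W2u (form0 _ _ _ _ iso2).
have b3 := mxrankS Lle.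
have b4 := (mxrank_adds_leqif (row_mx L1 (0 : 'M_(n1, n2))) (row_mx (0 : 'M_(n2, n1)) L2)).1.
rewrite addsmxE rank_row_mx0 rank_row_0mx in b4.
have b5 := leq_trans b3 b4.
clear b3 b4.
exists L1, L2; split => //.
- split => //; lia.
- split => //; lia.
- by rewrite /eqmx Lle Lge.
Qed.
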